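(* Let $\mathcal M=(M,\le,{}^\perp)$ be a complete orthomodular lattice and $L$ an involutive submonoid of $\mathbf{Lin}(\mathcal M)$ containing all Sasaki projections $\pi_m$ ($m\in M$). Then $\mathscr P(L)=(\mathscr P(L),\bigcup,\odot,{}^*,{\sim},\{\mathrm{id}_M\})$ is an involutive generalized dynamic algebra.
   Context: For an orthomodular lattice and $m\in M$, $\pi_m(x)=m\wedge(m^\perp\vee x)$. A map $f\colon M\to M$ is linear if there is $g\colon M\to M$ (unique, written $f^*$) with $f(x)\le y^\perp\iff x\le g(y)^\perp$ for all $x,y$. $\mathbf{Lin}(\mathcal M)$ is the set of linear maps, an involutive monoid under composition, $f\mapsto f^*$, $\mathrm{id}_M$; $\pi_m\in\mathbf{Lin}(\mathcal M)$ and $\pi_m^*=\pi_m$. $\mathscr P(L)$ is the powerset of $L$ with union as join, $A\odot B=\{a\circ b\mid a\in A,b\in B\}$, $A^*=\{a^*\mid a\in A\}$, ${\sim}A=\{\pi_{(\bigvee_{a\in A}a(1))^\perp}\}$; $(\mathscr P(L),\bigcup,\odot,{}^*,\{\mathrm{id}_M\})$ is an involutive unital quantale. An involutive unital quantale is $(Q,\bigsqcup,\odot,{}^*,e)$ with $Q$ a complete join-semilattice, $\odot$ associative and distributing over arbitrary joins in each argument, $e$ a unit, ${}^*$ with $x^{**}=x$, $(x\odot y)^*=y^*\odot x^*$, $(\bigsqcup x_i)^*=\bigsqcup x_i^*$. An involutive generalized dynamic algebra is such a quantale with ${\sim}\colon K\to K$ such that for all $x,y$ and families $(x_i)$: ${\sim}(x\odot{\sim}{\sim}y)={\sim}(x\odot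 y)$; ${\sim}(\bigsqcup_i{\sim}{\sim}x_i)={\sim}(\bigsqcup_i x_i)$; $({\sim}x)^*={\sim}x$; ${\sim}{\sim}({\sim}{\sim}x\odot y)={\sim}({\sim}x\sqcup{\sim}({\sim}x\sqcup y))$. *)

(* Defs.v *)
Set Implicit Arguments.

Record COML := {
  car :> Type;
  le : car -> car -> Prop;
  perp : car -> car;
  sup : (car -> Prop) -> car;
  le_refl : forall x, le x x;
  le_trans : forall x y z, le x y -> le y z -> le x z;
  le_antisym : forall x y, le x y -> le y x -> x = y;
  sup_ub : forall (S : car -> Prop) x, S x -> le x (sup S);
  sup_least : forall (S : car -> Prop) y, (forall x, S x -> le x y) -> le (sup S) y;
  perp_invol : forall x, perp (perp x) = x;
  perp_anti : forall x y, le x y -> le (perp y) (perp x);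
  perp_join : forall x, sup (fun z => z = x \/ z = perp x) = sup (fun _ => True);
  (* x /\ x^perp = 0  (meet = sup of common lower bounds, 0 = sup of empty set) *)
  perp_meet : forall x, sup (fun z => le z x /\ le z (perp x)) = sup (fun _ => False);
  orthomodular : forall x y, le x y ->
    y = sup (fun z => z = x \/ z = sup (fun w => le w y /\ le w (perp x)))
}.

Arguments le {c} _ _.
Arguments perp {c} _.
Arguments sup {c} _.

Definition join {M : COML} (x y : M) : M := sup (fun z => z = x \/ z = y).
Definition meet {M : COML} (x y : M) : M := sup (fun z => le z x /\ le z y).
Definition top (M : COML) : M := sup (fun _ => True).

Definition sasaki {M : COML} (m : M) : M -> M :=
  fun x => meet m (join (perp m) x).

Definition is_adjoint {M : COML} (f g : M -> M) : Prop :=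
  forall x y, le (f x) (perp y) <-> le x (perp (g y)).

Definition linear {M : COML} (f : M -> M) : Prop := exists g, is_adjoint f g.

Definition pset (M : COML) := (M -> M) -> Prop.

Definition psubset {M : COML} (A B : pset M) : Prop := forall f, A f -> B f.
Definition punion {M : COML} (S : pset M -> Prop) : pset M :=
  fun f => exists A, S A /\ A f.
Definition podot {M : COML} (A B : pset M) : pset M :=
  fun h => exists a b, A a /\ B b /\ h = (fun x => a (b x)).
Definition pstar {M : COML} (A : pset M) : pset M :=
  fun g => exists a, A a /\ is_adjoint a g.
Definition pneg {M : COML} (A : pset M) : pset M :=
  fun f => f = sasaki (perp (sup (fun z => exists a, A a /\ z = a (top M)))).
Definition punit (M : COML) : pset M := fun f => f = (fun x => x).

Section Algebra.
Variables (Q : Type) (D : Q -> Prop) (leQ : Q -> Q -> Prop) (supQ : (Q -> Prop) -> Q)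
          (mul : Q -> Q -> Q) (star : Q -> Q) (e : Q).

Definition subD (S : Q -> Prop) : Prop := forall x, S x -> D x.
Definition joinQ (x y : Q) : Q := supQ (fun z => z = x \/ z = y).

Record inv_unital_quantale_on : Prop := {
  iq_refl : forall x, D x -> leQ x x;
  iq_trans : forall x y z, D x -> D y -> D z -> leQ x y -> leQ y z -> leQ x z;
  iq_antisym : forall x y, D x -> D y -> leQ x y -> leQ y x -> x = y;
  iq_sup_in : forall S, subD S -> D (supQ S);
  iq_sup_ub : forall S x, subD S -> S x -> leQ x (supQ S);
  iq_sup_least : forall S y, subD S -> D y -> (forall x, S x -> leQ x y) -> leQ (supQ S) y;
  iq_mul_in : forall x y, D x -> D y -> D (mul x y);
  iq_star_in : forall x, D x -> D (star x);
  iq_e_in : D e;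
  iq_assoc : forall x y z, D x -> D y -> D z -> mul x (mul y z) = mul (mul x y) z;
  iq_distr_l : forall x S, D x -> subD S ->
    mul x (supQ S) = supQ (fun z => exists y, S y /\ z = mul x y);
  iq_distr_r : forall S x, subD S -> D x ->
    mul (supQ S) x = supQ (fun z => exists y, S y /\ z = mul y x);
  iq_unit_l : forall x, D x -> mul e x = x;
  iq_unit_r : forall x, D x -> mul x e = x;
  iq_star_invol : forall x, D x -> star (star x) = x;
  iq_star_mul : forall x y, D x -> D y -> star (mul x y) = mul (star y) (star x);
  iq_star_sup : forall S, subD S ->
    star (supQ S) = supQ (fun z => exists y, S y /\ z = star y)
}.

Record inv_gen_dynamic_algebra_on (neg : Q -> Q) : Prop := {
  igda_quantale : inv_unital_quantale_on;
  igda_neg_in : forall x, D x -> D (neg x);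
  igda_ax1 : forall x y, D x -> D y -> neg (mul x (neg (neg y))) = neg (mul x y);
  igda_ax2 : forall (I : Type) (x : I -> Q), (forall i, D (x i)) ->
    neg (supQ (fun z => exists i, z = neg (neg (x i))))
    = neg (supQ (fun z => exists i, z = x i));
  igda_ax3 : forall x, D x -> star (neg x) = neg x;
  igda_ax4 : forall x y, D x -> D y ->
    neg (neg (mul (neg (neg x)) y)) = neg (joinQ (neg x) (neg (joinQ (neg x) y)))
}.
End Algebra.

(* Main.v *)
Require Import Defs.
From Stdlib Require Import FunctionalExtensionality PropExtensionality.

Lemma le_ext_up {M : COML} (a b : M) : (forall z, le a z <-> le b z) -> a = b.
Proof. intros H. apply le_antisym; [apply (proj2 (H b)) | apply (proj1 (H a))]; apply le_refl. Qed.

Lemma le_ext_down {M : COML} (a b : M) : (forall z, le z a <-> le z b) -> a = b.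
Proof. intros H. apply le_antisym; [apply (proj1 (H a)) | apply (proj2 (H b))]; apply le_refl. Qed.

Lemma sup_le {M : COML} (S : M -> Prop) z : le (sup S) z <-> forall x, S x -> le x z.
Proof. split.
- intros H x Hx. eapply le_trans; [apply sup_ub; exact Hx | exact H].
- intros H. apply sup_least. exact H. Qed.

Lemma join_le {M : COML} (x y z : M) : le (join x y) z <-> le x z /\ le y z.
Proof. unfold join. rewrite sup_le. split.
- intros H; split; apply H; auto.
- intros [H1 H2] w [-> | ->]; auto. Qed.

Lemma le_meet {M : COML} (x y z : M) : le z (meet x y) <-> le z x /\ le z y.
Proof. unfold meet. split.
- intros H. split; eapply le_trans; try exact H; apply sup_least; intros w [Hw1 Hw2]; auto.
- intros H. apply sup_ub. exact H. Qed.

Lemma perp_le {M : COML} (x y : M) : le (perp x) y <-> le (perp y) x.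
Proof. split; intros H; apply perp_anti in H; rewrite perp_invol in H; exact H. Qed.

Lemma le_perp {M : COML} (x y : M) : le x (perp y) <-> le y (perp x).
Proof. split; intros H; apply perp_anti in H; rewrite perp_invol in H; exact H. Qed.

Lemma dm_join {M : COML} (a b : M) : perp (join a b) = meet (perp a) (perp b).
Proof. apply le_ext_down. intros z. rewrite le_perp, join_le, le_meet, !(le_perp z). tauto. Qed.

Lemma dm_meet {M : COML} (a b : M) : perp (meet a b) = join (perp a) (perp b).
Proof. rewrite <- (perp_invol _ (join _ _)), dm_join, !perp_invol. reflexivity. Qed.

Lemma join_comm {M : COML} (a b : M) : join a b = join b a.
Proof. apply le_ext_up; intros z; rewrite !join_le; tauto. Qed.

Lemma meet_comm {M : COML} (a b : M) : meet a b = meet b a.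
Proof. apply le_ext_down; intros z; rewrite !le_meet; tauto. Qed.

Lemma le_top {M : COML} (x : M) : le x (top M).
Proof. unfold top. apply sup_ub. exact I. Qed.

Lemma sasaki_top {M : COML} (m : M) : sasaki m (top M) = m.
Proof. unfold sasaki. apply le_ext_down. intros z. rewrite le_meet. split; [tauto|].
  intros H; split; auto. apply le_trans with (top M); [apply le_top|].
  unfold join; apply sup_ub; right; reflexivity. Qed.

Lemma oml {M : COML} (x y : M) : le x y -> y = join x (meet y (perp x)).
Proof. intros H. exact (orthomodular _ x y H). Qed.

Lemma oml_dual {M : COML} (a m : M) : le a m -> a = meet m (join (perp m) a).
Proof. intros H. apply perp_anti in H. apply oml in H.
  apply (f_equal perp) in H. rewrite perp_invol, dm_join, dm_meet, !perp_invol in H.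
  rewrite H at 1. rewrite (join_comm a). reflexivity. Qed.

Lemma join_ub_l {M : COML} (a b : M) : le a (join a b).
Proof. exact (proj1 (proj1 (join_le a b _) (le_refl _ _))). Qed.
Lemma join_ub_r {M : COML} (a b : M) : le b (join a b).
Proof. exact (proj2 (proj1 (join_le a b _) (le_refl _ _))). Qed.
Lemma meet_lb_l {M : COML} (a b : M) : le (meet a b) a.
Proof. exact (proj1 (proj1 (le_meet a b _) (le_refl _ _))). Qed.
Lemma meet_lb_r {M : COML} (a b : M) : le (meet a b) b.
Proof. exact (proj2 (proj1 (le_meet a b _) (le_refl _ _))). Qed.

Lemma sasaki_adj {M : COML} (m x z : M) :
  le (sasaki m x) z <-> le x (join (perp m) (meet m z)).
Proof. unfold sasaki. split.
- intros H. apply le_trans with (join (perp m) x); [apply join_ub_r|].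
  assert (Hj : le (perp m) (join (perp m) x)) by apply join_ub_l.
  apply oml in Hj. rewrite Hj at 1. rewrite perp_invol.
  rewrite join_le. split; [apply join_ub_l|].
  apply le_trans with (meet m z); [|apply join_ub_r].
  rewrite le_meet. split; [apply meet_lb_r|].
  rewrite meet_comm. exact H.
- intros H. assert (Hmz : le (meet m z) m) by apply meet_lb_l.
  apply oml_dual in Hmz.
  apply le_trans with (meet m (join (perp m) (meet m z))).
  + rewrite le_meet. split; [apply meet_lb_l|].
    eapply le_trans; [apply meet_lb_r|].
    rewrite join_le. split; [apply join_ub_l| exact H].
  + rewrite <- Hmz. apply meet_lb_r.
Qed.

Lemma sasaki_self {M : COML} (m : M) : is_adjoint (sasaki m) (sasaki m).
Proof. intros x y. rewrite sasaki_adj. unfold sasaki.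
  rewrite dm_meet, dm_join, !perp_invol. reflexivity. Qed.

Lemma adj_le {M : COML} {f g : M -> M} : is_adjoint f g ->
  forall u z, le (f u) z <-> le u (perp (g (perp z))).
Proof. intros H u z. rewrite <- (perp_invol _ z) at 1. apply H. Qed.

Lemma adj_sup {M : COML} (f g : M -> M) (S : M -> Prop) z : is_adjoint f g ->
  le (f (sup S)) z <-> forall x, S x -> le (f x) z.
Proof. intros H. rewrite (adj_le H), sup_le. split; intros H1 x Hx; apply (adj_le H); auto. Qed.

Lemma adj_sym {M : COML} (f g : M -> M) : is_adjoint f g -> is_adjoint g f.
Proof. intros H x y. split; intros H1.
- apply le_perp; apply (proj2 (H y x)); apply le_perp; exact H1.
- apply le_perp; apply (proj1 (H y x)); apply le_perp; exact H1. Qed.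

Lemma adj_unique {M : COML} (f g g' : M -> M) : is_adjoint f g -> is_adjoint f g' -> g = g'.
Proof. intros H1 H2. apply functional_extensionality. intros y.
  rewrite <- (perp_invol _ (g y)), <- (perp_invol _ (g' y)). f_equal.
  apply le_ext_down. intros x. rewrite <- (H1 x y), <- (H2 x y). tauto. Qed.

Lemma adj_comp {M : COML} (a a' b b' : M -> M) : is_adjoint a a' -> is_adjoint b b' ->
  is_adjoint (fun x => a (b x)) (fun y => b' (a' y)).
Proof. intros Ha Hb x y. rewrite (Ha (b x) y), (Hb x (a' y)). tauto. Qed.

Lemma pext {M : COML} (A B : pset M) : (forall f, A f <-> B f) -> A = B.
Proof. intros H. apply functional_extensionality. intros f.
  apply propositional_extensionality. apply H. Qed.

Definition sA {M : COML} (A : pset M) : M := sup (fun z => exists a, A a /\ z = a (top M)).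

Lemma sA_le {M : COML} (A : pset M) z : le (sA A) z <-> forall a, A a -> le (a (top M)) z.
Proof. unfold sA. rewrite sup_le. split.
- intros H a Ha. apply H. eauto.
- intros H x [a [Ha ->]]. auto. Qed.

Lemma sA_pneg {M : COML} (A : pset M) : sA (pneg A) = perp (sA A).
Proof. apply le_ext_up. intros z. rewrite sA_le. unfold pneg. split.
- intros H. rewrite <- (sasaki_top (perp (sA A))). apply H. reflexivity.
- intros H a ->. rewrite sasaki_top. exact H. Qed.

Lemma pneg_pneg {M : COML} (A : pset M) : pneg (pneg A) = fun f => f = sasaki (sA A).
Proof. unfold pneg at 1. fold (sA (pneg A)). rewrite sA_pneg, perp_invol. reflexivity. Qed.

Lemma pneg_congr {M : COML} (A B : pset M) : sA A = sA B -> pneg A = pneg B.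
Proof. intros H. unfold pneg. fold (sA A). fold (sA B). rewrite H. reflexivity. Qed.

Lemma lin_sA {M : COML} (f g : M -> M) (A : pset M) z : is_adjoint f g ->
  le (f (sA A)) z <-> forall b, A b -> le (f (b (top M))) z.
Proof. intros H. unfold sA. rewrite (adj_sup f g _ z H). split.
- intros H1 b Hb. apply H1. eauto.
- intros H1 w [b [Hb ->]]. auto. Qed.

Lemma sA_union2 {M : COML} (A B : pset M) :
  sA (joinQ (@punion M) A B) = join (sA A) (sA B).
Proof. apply le_ext_up. intros z. rewrite sA_le, join_le, !sA_le. split.
- intros H. split; intros a Ha; apply H; [exists A | exists B]; unfold joinQ; auto.
- intros [H1 H2] a [C [[-> | ->] Ca]]; auto. Qed.

Lemma pstar_sing {M : COML} (m : M) :
  pstar (fun f => f = sasaki m) = (fun f => f = sasaki m).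
Proof. apply pext. intros f. split.
- intros [a [-> Hadj]]. symmetry. exact (adj_unique _ _ _ (sasaki_self m) Hadj).
- intros ->. exists (sasaki m). split; [reflexivity| apply sasaki_self]. Qed.

Theorem lemma3p9 (M : COML) (L : (M -> M) -> Prop)
  (HLin : forall f, L f -> linear f)
  (Hid : L (fun x => x))
  (Hcomp : forall f g, L f -> L g -> L (fun x => f (g x)))
  (Hinv : forall f g, L f -> is_adjoint f g -> L g)
  (Hpi : forall m : M, L (sasaki m)) :
  inv_gen_dynamic_algebra_on
    (fun A : pset M => psubset A L)
    (@psubset M) (@punion M) (@podot M) (@pstar M) (punit M) (@pneg M).
Proof.
  constructor; [constructor| | | | |].
  - intros x _ f Hf. exact Hf.
  - unfold psubset; eauto.
  - intros x y _ _ H1 H2. apply pext. split; auto.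
  - intros S HS f [A [HA Af]]. exact (HS A HA f Af).
  - intros S x _ Sx f xf. exists x; auto.
  - intros S y _ _ H f [A [HA Af]]. exact (H A HA f Af).
  - intros x y Dx Dy h [a [b [Ha [Hb ->]]]]. apply Hcomp; auto.
  - intros x Dx g [a [Ha Hadj]]. exact (Hinv a g (Dx a Ha) Hadj).
  - intros f ->. exact Hid.
  - intros x y z _ _ _. apply pext. intros h. split.
    + intros [a [bc [Ha [[b [c [Hb [Hc ->]]]] ->]]]].
      exists (fun x => a (b x)), c. split; [exists a, b; auto|]. split; auto.
    + intros [ab [c [[a [b [Ha [Hb ->]]]] [Hc ->]]]].
      exists a, (fun x => b (c x)). split; auto. split; [exists b, c; auto| reflexivity].
  - intros x S _ _. apply pext. intros h. split.
    + intros [a [b [Ha [[A [SA Ab]] ->]]]].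
      exists (podot x A). split; [exists A; auto| exists a, b; auto].
    + intros [Z [[y [Sy ->]] [a [b [Ha [Hb ->]]]]]].
      exists a, b. split; auto. split; [exists y; auto| reflexivity].
  - intros S x _ _. apply pext. intros h. split.
    + intros [a [b [[A [SA Aa]] [Hb ->]]]].
      exists (podot A x). split; [exists A; auto| exists a, b; auto].
    + intros [Z [[y [Sy ->]] [a [b [Ha [Hb ->]]]]]].
      exists a, b. split; [exists y; auto|]. split; auto.
  - intros x _. apply pext. intros h. split.
    + intros [a [b [-> [Hb ->]]]]. exact Hb.
    + intros Hh. exists (fun x => x), h. split; [reflexivity|]. split; [exact Hh| reflexivity].
  - intros x _. apply pext. intros h. split.
    + intros [a [b [Ha [-> ->]]]]. exact Ha.
    + intros Hh. exists h, (fun x => x). split; [exact Hh|]. split; reflexivity.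
  - intros x Dx. apply pext. intros h. split.
    + intros [g [[a [Ha Hag]] Hgh]].
      rewrite <- (adj_unique _ _ _ (adj_sym _ _ Hag) Hgh). exact Ha.
    + intros Hh. destruct (HLin h (Dx h Hh)) as [g Hg].
      exists g. split; [exists h; auto| apply adj_sym; exact Hg].
  - intros x y Dx Dy. apply pext. intros h. split.
    + intros [c [[a [b [Ha [Hb ->]]]] Hc]].
      destruct (HLin a (Dx a Ha)) as [a' Ha'].
      destruct (HLin b (Dy b Hb)) as [b' Hb'].
      exists b', a'. split; [exists b; auto|]. split; [exists a; auto|].
      exact (adj_unique _ _ _ Hc (adj_comp _ _ _ _ Ha' Hb')).
    + intros [b' [a' [[b [Hb Hbb']] [[a [Ha Haa']] ->]]]].
      exists (fun x => a (b x)). split; [exists a, b; auto| apply adj_comp; auto].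
  - intros S _. apply pext. intros h. split.
    + intros [a [[A [SA Aa]] Hadj]].
      exists (pstar A). split; [exists A; auto| exists a; auto].
    + intros [Z [[y [Sy ->]] [a [ya Hadj]]]].
      exists a. split; [exists y; auto| auto].
  - intros x _ f ->. apply Hpi.
  - intros x y Dx Dy. apply pneg_congr. rewrite pneg_pneg.
    apply le_ext_up. intros z. rewrite !sA_le. split.
    + intros H h [a [b [Ha [Hb ->]]]].
      destruct (HLin a (Dx a Ha)) as [a' Ha'].
      specialize (H (fun x => a (sasaki (sA y) x))).
      simpl in H. rewrite sasaki_top in H.
      rewrite (lin_sA _ _ _ _ Ha') in H. apply H; [|exact Hb].
      exists a, (sasaki (sA y)). auto.
    + intros H h [a [p [Ha [Hp ->]]]]. subst p.
      destruct (HLin a (Dx a Ha)) as [a' Ha'].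
      rewrite sasaki_top, (lin_sA _ _ _ _ Ha'). intros b Hb.
      apply (H (fun x => a (b x))). exists a, b. auto.
  - intros I x _. apply pneg_congr.
    apply le_ext_up. intros z. rewrite !sA_le. split.
    + intros H h [A [[i ->] Ah]].
      specialize (H (sasaki (sA (x i)))).
      rewrite sasaki_top, sA_le in H. apply H; [|exact Ah].
      exists (pneg (pneg (x i))). split; [exists i; reflexivity| rewrite pneg_pneg; reflexivity].
    + intros H h [A [[i ->] Ah]]. rewrite pneg_pneg in Ah. subst h.
      rewrite sasaki_top, sA_le. intros a Ha. apply H.
      exists (x i). split; [exists i; reflexivity| exact Ha].
  - intros x _. unfold pneg. apply pstar_sing.
  - intros x y Dx Dy. rewrite pneg_pneg, pneg_pneg.
    assert (E : sA (podot (fun f => f = sasaki (sA x)) y)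
                = perp (sA (joinQ (@punion M) (pneg x) (pneg (joinQ (@punion M) (pneg x) y))))).
    { rewrite sA_union2, !sA_pneg, sA_union2, sA_pneg, dm_join, !perp_invol.
      fold (sasaki (sA x) (sA y)).
      apply le_ext_up. intros z. rewrite sA_le, (lin_sA _ _ _ _ (sasaki_self (sA x))). split.
      + intros H b Hb. apply (H (fun t => sasaki (sA x) (b t))). exists (sasaki (sA x)), b. auto.
      + intros H h [a [b [-> [Hb ->]]]]. apply H. exact Hb. }
    rewrite E. reflexivity.
Qed.
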